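(* Let $R$ be any binary relation on $U$. Then $\mathrm{DM(RS)}$ is a subdirect product of the complete lattices $\wp(U)^{\blacktriangledown}$ and $\wp(U)^{\blacktriangle}$; that is, $\mathrm{DM(RS)}$ is a complete sublattice of $\wp(U)^{\blacktriangledown}\times\wp(U)^{\blacktriangle}$ and both canonical projections restricted to $\mathrm{DM(RS)}$ are surjective onto $\wp(U)^{\blacktriangledown}$ and $\wp(U)^{\blacktriangle}$ respectively.
   Context: Let $U$ be a set and $R\subseteq U\times U$ a binary relation. For $x\in U$, $R(x)=\{y\in U\mid (x,y)\in R\}$ and $\breve R(x)=\{y\in U\mid (y,x)\in R\}$. For $X\subseteq U$: $X^{\blacktriangledown}=\{x\in U\mid R(x)\subseteq X\}$, $X^{\blacktriangle}=\{x\in U\mid R(x)\cap X\neq\emptyset\}$, $X^{\triangledown}=\{x\in U\mid \breve R(x)\subseteq X\}$, $X^{\vartriangle}=\{x\in U\mid \breve R(x)\cap X\neq\emptyset\}$; composites like $X^{\vartriangle\blacktriangledown}$ mean $(X^{\vartriangle})^{\blacktriangledown}$. $\wp(U)^{\blacktriangledown}=\{X^{\blacktriangledown}\mid X\subseteq U\}$ is a complete lattice under $\subseteq$ with meets $\bigcap$ and joins $(\bigcup_i X_i)^{\vartriangle\blacktriangledown}$; $\wp(U)^{\blacktriangle}=\{X^{\blacktriangle}\mid X\subseteq U\}$ is a complete lattice with joins $\bigcup$ and meets $(\bigcap_iY_i)^{\triangledown\blacktriangle}$; their product is ordered coordinatewise. $\mathcal S=\{x\in U\mid |R(x)|=1\}$.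 $\mathrm{RS}=\{(X^{\blacktriangledown},X^{\blacktriangle})\mid X\subseteq U\}$ ordered coordinatewise; $\mathrm{DM(RS)}$ is its Dedekind–MacNeille completion, identified with $\{(A,B)\in\wp(U)^{\blacktriangledown}\times\wp(U)^{\blacktriangle}\mid A^{\vartriangle\blacktriangle}\subseteq B,\ A\cap\mathcal S=B\cap\mathcal S\}$, whose arbitrary meets and joins are $\bigwedge_i(X_i,Y_i)=(\bigcap_iX_i,(\bigcap_iY_i)^{\triangledown\blacktriangle})$ and $\bigvee_i(X_i,Y_i)=((\bigcup_iX_i)^{\vartriangle\blacktriangledown},\bigcup_iY_i)$. *)

(* Defs.v *)
Definition subset {U : Type} (X Y : U -> Prop) : Prop := forall x, X x -> Y x.
Definition seteq {U : Type} (X Y : U -> Prop) : Prop := forall x, X x <-> Y x.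

(* R(x) = {y | R x y},  R^breve(x) = {y | R y x} *)
(* X^{black down triangle} = {x | R(x) ⊆ X} *)
Definition boxD {U : Type} (R : U -> U -> Prop) (X : U -> Prop) : U -> Prop :=
  fun x => forall y, R x y -> X y.
(* X^{black up triangle} = {x | R(x) ∩ X ≠ ∅} *)
Definition diaD {U : Type} (R : U -> U -> Prop) (X : U -> Prop) : U -> Prop :=
  fun x => exists y, R x y /\ X y.
(* X^{white down triangle} = {x | R^breve(x) ⊆ X} *)
Definition boxU {U : Type} (R : U -> U -> Prop) (X : U -> Prop) : U -> Prop :=
  fun x => forall y, R y x -> X y.
(* X^{white up triangle} = {x | R^breve(x) ∩ X ≠ ∅} *)
Definition diaU {U : Type} (R : U -> U -> Prop) (X : U -> Prop) : U -> Prop :=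
  fun x => exists y, R y x /\ X y.

(* S = {x | |R(x)| = 1} *)
Definition Sing {U : Type} (R : U -> U -> Prop) : U -> Prop :=
  fun x => exists y, R x y /\ forall z, R x z -> z = y.

Definition inBoxD {U : Type} (R : U -> U -> Prop) (A : U -> Prop) : Prop :=
  exists X, seteq A (boxD R X).
Definition inDiaD {U : Type} (R : U -> U -> Prop) (B : U -> Prop) : Prop :=
  exists X, seteq B (diaD R X).

(* DM(RS), identified with the set of pairs (A,B) ∈ ℘(U)^▼ × ℘(U)^▲ with
   A^{△▲} ⊆ B and A ∩ S = B ∩ S. *)
Definition DMRS {U : Type} (R : U -> U -> Prop) (A B : U -> Prop) : Prop :=
  inBoxD R A /\ inDiaD R B /\ subset (diaD R (diaU R A)) B /\
  seteq (fun x => A x /\ Sing R x) (fun x => B x /\ Sing R x).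

(* Arbitrary meets and joins in the product lattice ℘(U)^▼ × ℘(U)^▲
   of a family (FA i, FB i)_{i ∈ I}:
   meet = (⋂ FA_i, (⋂ FB_i)^{▽▲}),  join = ((⋃ FA_i)^{△▼}, ⋃ FB_i). *)
Definition bigcap {U I : Type} (F : I -> U -> Prop) : U -> Prop :=
  fun x => forall i, F i x.
Definition bigcup {U I : Type} (F : I -> U -> Prop) : U -> Prop :=
  fun x => exists i, F i x.

Definition prodMeetA {U I : Type} (R : U -> U -> Prop) (FA FB : I -> U -> Prop)
  : U -> Prop := bigcap FA.
Definition prodMeetB {U I : Type} (R : U -> U -> Prop) (FA FB : I -> U -> Prop)
  : U -> Prop := diaD R (boxU R (bigcap FB)).
Definition prodJoinA {U I : Type} (R : U -> U -> Prop) (FA FB : I -> U -> Prop)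
  : U -> Prop := boxD R (diaU R (bigcup FA)).
Definition prodJoinB {U I : Type} (R : U -> U -> Prop) (FA FB : I -> U -> Prop)
  : U -> Prop := bigcup FB.

(* Main.v *)
Require Import Defs.

Theorem mainTheorem18 (U : Type) (R : U -> U -> Prop) :
  (forall (I : Type) (FA FB : I -> U -> Prop),
      (forall i, DMRS R (FA i) (FB i)) ->
      DMRS R (prodMeetA R FA FB) (prodMeetB R FA FB) /\
      DMRS R (prodJoinA R FA FB) (prodJoinB R FA FB)) /\
  (forall A : U -> Prop, inBoxD R A -> exists B, DMRS R A B) /\
  (forall B : U -> Prop, inDiaD R B -> exists A, DMRS R A B).
Proof.
  unfold DMRS, inBoxD, inDiaD, subset, seteq, prodMeetA, prodMeetB,
    prodJoinA, prodJoinB, bigcap, bigcup, boxD, diaD, boxU, diaU, Sing.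
  split; [|split].
  - intros I FA FB H. split.
    + split; [|split; [|split]].
      * exists (fun y => forall i, exists z, R z y /\ FA i z).
        intro x; split.
        -- intros Hx y Hy i. exists x; auto.
        -- intros Hx i. destruct (H i) as [[X HX] _]. apply HX. intros y Hy.
           destruct (Hx y Hy i) as [z [Hzy Hz]].
           exact (proj1 (HX z) Hz y Hzy).
      * exists (fun y => forall z, R z y -> forall i, FB i z); intro x; split; auto.
      * intros x [y [Hxy [z [Hzy Hz]]]]. exists y. split; auto.
        intros w Hwy i. destruct (H i) as [_ [_ [Hs _]]]. apply Hs.
        exists y; split; auto. exists z; auto.
      * intro x; split.
        -- intros [Hx [y [Hxy Hu]]]. split; [|exists y; auto].
           exists y. split; auto. intros w Hwy i. destruct (H i) as [_ [_ [Hs _]]].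
           apply Hs. exists y; split; auto. exists x; auto.
        -- intros [[y [Hxy Hy]] [y' [Hxy' Hu]]]. split; [|exists y'; auto].
           intro i. destruct (H i) as [_ [_ [_ He]]]. apply (proj2 (He x)).
           split; [apply Hy; auto| exists y'; auto].
    + split; [|split; [|split]].
      * exists (fun y => exists z, R z y /\ exists i, FA i z); intro x; split; auto.
      * exists (fun y => exists i, exists Y, (forall x, FB i x <-> exists y, R x y /\ Y y) /\ Y y).
        intro x; split.
        -- intros [i Hi]. destruct (H i) as [_ [[Y HY] _]].
           destruct (proj1 (HY x) Hi) as [y [Hxy Hy]].
           exists y; split; auto. exists i, Y; auto.
        -- intros [y [Hxy [i [Y [HY Hy]]]]]. exists i. apply HY. exists y; auto.
      * intros x [y [Hxy [z [Hzy Hz]]]]. destruct (Hz y Hzy) as [u [Huy [j Hj]]].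
        exists j. destruct (H j) as [_ [_ [Hs _]]]. apply Hs.
        exists y; split; auto. exists u; auto.
      * intro x; split.
        -- intros [Hx [y [Hxy Hu]]]. split; [|exists y; auto].
           destruct (Hx y Hxy) as [u [Huy [j Hj]]]. exists j.
           destruct (H j) as [_ [_ [Hs _]]]. apply Hs.
           exists y; split; auto. exists u; auto.
        -- intros [[j Hj] HS]. split; [|exact HS].
           destruct (H j) as [_ [_ [_ He]]].
           assert (HA : FA j x) by (apply (proj2 (He x)); auto).
           intros y Hxy. exists x. split; auto. exists j; auto.
  - intros A [X HX]. exists (fun x => exists y, R x y /\ exists z, R z y /\ A z).
    split; [exists X; auto|split; [|split]].
    + exists (fun y => exists z, R z y /\ A z); intro x; split; auto.
    + auto.
    + intro x; split.
      * intros [Hx [y [Hxy Hu]]]. split; [|exists y; auto].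
        exists y; split; auto. exists x; auto.
      * intros [[y [Hxy [z [Hzy Hz]]]] [y' [Hxy' Hu]]]. split; [|exists y'; auto].
        apply HX. intros w Hw. rewrite (Hu w Hw). rewrite <- (Hu y Hxy).
        apply (proj1 (HX z) Hz); auto.
  - intros B [Y HY]. exists (fun x => forall y, R x y -> forall z, R z y -> B z).
    split; [exists (fun y => forall z, R z y -> B z); intro x; split; auto|split; [exists Y; auto|split]].
    + intros x [y [Hxy [z [Hzy Hz]]]]. exact (Hz y Hzy x Hxy).
    + intro x; split.
      * intros [Hx [y [Hxy Hu]]]. split; [|exists y; auto]. exact (Hx y Hxy x Hxy).
      * intros [Hx [y' [Hxy' Hu]]]. split; [|exists y'; auto].
        destruct (proj1 (HY x) Hx) as [y [Hxy Hy]].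
        intros w Hw z Hzw. apply HY. exists w; split; auto.
        rewrite (Hu w Hw). rewrite <- (Hu y Hxy). exact Hy.
Qed.
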